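(* Let $M$ be a 4-dimensional chart domain with coordinates $(t,r,\theta,\phi)$, let $\Gamma$ be a spherically symmetric torsion-free affine connection on $M$ with coefficients given by functions $k_1,\dots,k_{12}$ of $(t,r)$ as in the context, and let $L=L(t,r,\dot t,\dot r,w)$ be an $SO(3)$-spatially spherically symmetric pseudo-Finsler function. Then the system of equations $\delta_\theta L=0=\delta_\phi L$, where $\delta_a=\partial_a-\Gamma^c{}_{ab}(x)\dot x^b\dot\partial_c$, is equivalent to $\delta_wL:=\left(wk_7\dot\partial_t+wk_{10}\dot\partial_r+(k_8\dot t+k_9\dot r)\partial_w\right)L=0$ together with $k_{11}=k_{12}=0$.
   Context: Induced coordinates $(t,r,\theta,\phi,\dot t,\dot r,\dot\theta,\dot\phi)$ on $TM$. A pseudo-Finsler function is a smooth $L$ on a conic subbundle $\mathcal{A}\subset TM\setminus\{0\}$ (open, projecting onto $M$, stable under positive rescaling of $\dot x$), positively 2-homogeneous in $\dot x$, with $g_{ab}=\tfrac12\dot\partial_a\dot\partial_bL$ non-degenerate. $SO(3)$-spatially spherically symmetric means $L$ depends only on $(t,r,\dot t,\dot r,w)$ with $w^2=\dot\theta^2+\sin^2\theta\,\dot\phi^2$; $\partial_w$ is defined by $w\partial_w=\dot\theta\dot\partial_\theta+\dot\phi\dot\partial_\phi$. The spherically symmetric torsion-free connection: the nonzero coefficients (symmetric in the lower indices) are $\Gamma^t_{tt}=k_1$, $\Gamma^t_{tr}=k_2$, $\Gamma^t_{rr}=k_3$, $\Gamma^r_{tt}=k_4$, $\Gamma^r_{rr}=k_5$,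 $\Gamma^r_{tr}=k_6$, $\Gamma^t_{\theta\theta}=k_7$, $\Gamma^t_{\phi\phi}=k_7\sin^2\theta$, $\Gamma^\theta_{\theta t}=\Gamma^\phi_{\phi t}=k_8$, $\Gamma^\theta_{\theta r}=\Gamma^\phi_{\phi r}=k_9$, $\Gamma^r_{\theta\theta}=k_{10}$, $\Gamma^r_{\phi\phi}=k_{10}\sin^2\theta$, $\Gamma^\phi_{t\theta}=k_{11}/\sin\theta$, $\Gamma^\theta_{\phi t}=-k_{11}\sin\theta$, $\Gamma^\phi_{r\theta}=k_{12}/\sin\theta$, $\Gamma^\theta_{r\phi}=-k_{12}\sin\theta$, $\Gamma^\phi_{\theta\phi}=\cot\theta$, $\Gamma^\theta_{\phi\phi}=-\sin\theta\cos\theta$, where $k_i=k_i(t,r)$. *)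

(* Defs.v *)
From HB Require Import structures.
From mathcomp Require Import all_boot all_order all_algebra.
From mathcomp Require Import all_classical all_reals all_analysis.
Set Implicit Arguments. Unset Strict Implicit. Unset Printing Implicit Defensive.
Import Order.TTheory GRing.Theory Num.Theory.
Import numFieldNormedType.Exports.
Local Open Scope classical_set_scope.
Local Open Scope ring_scope.

Section Defs.
Variable R : realType.

(* Points of TM (restricted to the chart) are rows
   (t, r, theta, phi, tdot, rdot, thetadot, phidot) : 'rV[R]_8. *)
Definition co (p : 'rV[R]_8) (k : nat) : R := p ord0 (inord k).
Definition base (p : 'rV[R]_8) : 'rV[R]_4 := \row_(i < 4) p ord0 (inord i).
Definition vel (p : 'rV[R]_8) : 'rV[R]_4 := \row_(i < 4) p ord0 (inord (4 + i)).
Definition scalev (lam : R) (p : 'rV[R]_8) : 'rV[R]_8 :=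
  \row_(i < 8) (if (i < 4)%N then p ord0 i else lam * p ord0 i).

Definition wco (p : 'rV[R]_8) : R :=
  Num.sqrt (co p 6 ^+ 2 + sin (co p 2) ^+ 2 * co p 7 ^+ 2).

Definition ev (i : nat) : 'rV[R]_8 := delta_mx ord0 (inord i).
Definition partial (i : nat) (f : 'rV[R]_8 -> R) : 'rV[R]_8 -> R :=
  fun x => 'D_(ev i) f x.

Fixpoint Ck (n : nat) (A : set 'rV[R]_8) (f : 'rV[R]_8 -> R) : Prop :=
  (forall x, A x -> {for x, continuous f}) /\
  match n with
  | 0%N => True
  | n'.+1 => forall i : 'I_8,
      (forall x, A x -> derivable f x (ev i)) /\ Ck n' A (partial i f)
  end.
Definition smooth_on (A : set 'rV[R]_8) (f : 'rV[R]_8 -> R) : Prop :=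
  forall n, Ck n A f.

Definition chart_domain (M : set 'rV[R]_4) : Prop :=
  open M /\ forall x, M x -> sin (x ord0 (inord 2)) != 0.

Definition conic_subbundle (M : set 'rV[R]_4) (A : set 'rV[R]_8) : Prop :=
  [/\ open A,
      (forall p, A p -> M (base p) /\ vel p != 0),
      (forall x, M x -> exists p, A p /\ base p = x)
    & (forall p lam, A p -> 0 < lam -> A (scalev lam p))].

Definition gmat (L : 'rV[R]_8 -> R) (p : 'rV[R]_8) : 'M[R]_4 :=
  \matrix_(a < 4, b < 4) (2^-1 * partial (4 + a) (partial (4 + b) L) p).

Definition pseudo_finsler (A : set 'rV[R]_8) (L : 'rV[R]_8 -> R) : Prop :=
  [/\ smooth_on A L,
      (forall p lam, A p -> 0 < lam -> L (scalev lam p) = lam ^+ 2 * L p)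
    & (forall p, A p -> \det (gmat L p) != 0)].

Definition so3_symmetric (A : set 'rV[R]_8) (L : 'rV[R]_8 -> R) : Prop :=
  exists l : R -> R -> R -> R -> R -> R,
    forall p, A p -> L p = l (co p 0) (co p 1) (co p 4) (co p 5) (wco p).

(* Connection coefficients Gamma^c_{ab}, indices 0..3 = t, r, theta, phi;
   k i = k_i (i = 1..12), functions of (t, r). Gam0 for a <= b. *)
Definition Gam0 (k : nat -> R -> R -> R) (c a b : nat) (t r th : R) : R :=
  match c, a, b with
  | 0%N, 0%N, 0%N => k 1%N t r
  | 0%N, 0%N, 1%N => k 2%N t r
  | 0%N, 1%N, 1%N => k 3%N t r
  | 1%N, 0%N, 0%N => k 4%N t r
  | 1%N, 1%N, 1%N => k 5%N t r
  | 1%N, 0%N, 1%N => k 6%N t r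
  | 0%N, 2%N, 2%N => k 7%N t r
  | 0%N, 3%N, 3%N => k 7%N t r * sin th ^+ 2
  | 2%N, 0%N, 2%N => k 8%N t r
  | 3%N, 0%N, 3%N => k 8%N t r
  | 2%N, 1%N, 2%N => k 9%N t r
  | 3%N, 1%N, 3%N => k 9%N t r
  | 1%N, 2%N, 2%N => k 10%N t r
  | 1%N, 3%N, 3%N => k 10%N t r * sin th ^+ 2
  | 3%N, 0%N, 2%N => k 11%N t r / sin th
  | 2%N, 0%N, 3%N => - (k 11%N t r * sin th)
  | 3%N, 1%N, 2%N => k 12%N t r / sin th
  | 2%N, 1%N, 3%N => - (k 12%N t r * sin th)
  | 3%N, 2%N, 3%N => cos th / sin th
  | 2%N, 3%N, 3%N => - (sin th * cos th)
  | _, _, _ => 0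
  end.
Definition Gam (k : nat -> R -> R -> R) (c a b : nat) (t r th : R) : R :=
  if (a <= b)%N then Gam0 k c a b t r th else Gam0 k c b a t r th.

Definition deltaL (k : nat -> R -> R -> R) (a : nat) (L : 'rV[R]_8 -> R)
  (p : 'rV[R]_8) : R :=
  partial a L p -
  \sum_(b < 4) \sum_(c < 4)
     Gam k c a b (co p 0) (co p 1) (co p 2) * co p (4 + b) * partial (4 + c) L p.

(* partial_w L, defined by w partial_w = thetadot dot-partial_theta + phidot dot-partial_phi
   (meaningful where w <> 0) *)
Definition partial_w (L : 'rV[R]_8 -> R) (p : 'rV[R]_8) : R :=
  (co p 6 * partial 6 L p + co p 7 * partial 7 L p) / wco p.

Definition delta_w (k : nat -> R -> R -> R) (L : 'rV[R]_8 -> R) (p : 'rV[R]_8) : R :=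
  let t := co p 0 in let r := co p 1 in
  wco p * k 7%N t r * partial 4 L p + wco p * k 10%N t r * partial 5 L p
  + (k 8%N t r * co p 4 + k 9%N t r * co p 5) * partial_w L p.

End Defs.

(* Main.v *)
Require Import Defs.
From HB Require Import structures.
From mathcomp Require Import all_boot all_order all_algebra.
From mathcomp Require Import all_classical all_reals all_analysis.
From mathcomp Require Import ring lra.
Import Order.TTheory GRing.Theory Num.Theory.
Import numFieldNormedType.Exports.
Local Open Scope classical_set_scope.
Local Open Scope ring_scope.

Section H.
Variable R : realType.
Implicit Types (p q : 'rV[R]_8).

Lemma coE p (h : R) i j : (i < 8)%N -> (j < 8)%N ->
  co (h *: ev R i + p) j = h * (i == j)%:R + co p j.
Proof.
move=> hi hj; rewrite /co /ev !mxE eqxx /=.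
have -> : (inord j == inord i :> 'I_8) = (j == i).
  by rewrite -val_eqE /= !inordK.
by rewrite eq_sym.
Qed.

Lemma Dline (f : 'rV[R]_8 -> R) q v :
  'D_v f q = 'D_1 (fun h : R => f (h *: v + q)) 0.
Proof.
rewrite /derive.
have E : (fun h : R => h^-1 *: ((f \o shift q) (h *: v) - f q)) =
  (fun h : R => h^-1 *: (((fun h0 : R => f (h0 *: v + q)) \o shift 0) (h *: 1) - f (0 *: v + q))).
  by apply/funext => h /=; rewrite addr0 scale0r add0r [_ *: 1]mulr1.
by rewrite E.
Qed.

Lemma derivable_line (f : 'rV[R]_8 -> R) q v :
  derivable f q v -> derivable (fun h : R => f (h *: v + q)) 0 1.
Proof. by move/derivable1P. Qed.

Lemma near_line (A : set 'rV[R]_8) q v : open A -> A q ->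
  \forall h \near (0:R), A (h *: v + q).
Proof.
move=> oA Aq.
have c : (fun h : R => h *: v + q) @ (0:R) --> 0 *: v + q.
  apply: cvgD; last exact: cvg_cst.
  apply: cvgZr_tmp. exact: cvg_id.
rewrite scale0r add0r in c.
apply: c. exact: (open_nbhs_nbhs (conj oA Aq)).
Qed.

Lemma der_cont (f : R -> R) x : derivable f x 1 -> f @ x --> f x.
Proof. by move/derivable1_diffP/differentiable_continuous. Qed.

Variables (A : set 'rV[R]_8) (L : 'rV[R]_8 -> R) (l : R -> R -> R -> R -> R -> R).
Hypothesis oA : open A.
Hypothesis HL : forall p, A p -> L p = l (co p 0) (co p 1) (co p 4) (co p 5) (wco p).
Hypothesis Hd : forall p i, (i < 8)%N -> A p -> derivable L p (ev R i).

Definition S4 : seq nat := [:: 2; 3; 6; 7]%N.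

Lemma coS p h i k : i \in S4 -> k \in [:: 0; 1; 4; 5]%N -> co (h *: ev R i + p) k = co p k.
Proof.
rewrite !inE => /or4P[]/eqP-> /or4P[]/eqP->; rewrite coE //= mulr0 add0r //.
Qed.

Lemma Leq_line p i j h1 h2 : i \in S4 -> j \in S4 ->
  A (h1 *: ev R i + p) -> A (h2 *: ev R j + p) ->
  wco (h1 *: ev R i + p) = wco (h2 *: ev R j + p) ->
  L (h1 *: ev R i + p) = L (h2 *: ev R j + p).
Proof.
move=> hi hj A1 A2 hw; rewrite !HL // hw.
have E k : k \in [:: 0; 1; 4; 5]%N ->
  co (h1 *: ev R i + p) k = co (h2 *: ev R j + p) k.
  by move=> hk; rewrite !coS.
by rewrite !E.
Qed.

Lemma iS4 i : i \in S4 -> (i < 8)%N.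
Proof. by rewrite !inE => /or4P[]/eqP->. Qed.

Lemma Dcomp p i j (m : R -> R) (dm : R) : A p -> i \in S4 -> j \in S4 ->
  is_derive (0:R) (1:R) m dm -> m 0 = 0 ->
  (\forall h \near 0, wco (h *: ev R i + p) = wco (m h *: ev R j + p)) ->
  partial i L p = partial j L p * dm.
Proof.
move=> Ap hi hj dmh m0 hw.
rewrite /partial !Dline.
set g := fun h : R => L (h *: ev R j + p).
have dg : derivable g 0 1 by apply/derivable_line/Hd => //; exact: iS4.
have mc : m @ 0 --> m 0 by apply: der_cont; case: dmh.
rewrite m0 in mc.
have Nj := @near_line A p (ev R j) oA Ap.
have Ni := @near_line A p (ev R i) oA Ap.
have Nm := mc _ Nj.
have -> : 'D_1 (fun h : R => L (h *: ev R i + p)) 0 = 'D_1 (g \o m) 0.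
  apply: near_eq_derive; near=> h.
  rewrite /g /=; apply: Leq_line => //.
  - by near: h.
  - by near: h.
  - by near: h.
have dg' : is_derive (m 0) 1 g ('D_1 g 0).
  by rewrite m0; apply: derivableP.
have H := is_derive1_comp dg' dmh.
by rewrite derive_val.
Unshelve. all: by end_near.
Qed.

Lemma wcoE p h i : (i < 8)%N -> wco (h *: ev R i + p) =
  Num.sqrt ((h * (i == 6)%:R + co p 6) ^+ 2 +
    sin (h * (i == 2)%:R + co p 2) ^+ 2 * (h * (i == 7)%:R + co p 7) ^+ 2).
Proof. by move=> hi; rewrite /wco !coE. Qed.

Lemma Ev p i : A p -> i \in [:: 6; 7]%N -> co p i = 0 -> partial i L p = 0.
Proof.
move=> Ap hi c0.
have hi' : i \in S4 by move: hi; rewrite !inE => /orP[]/eqP->.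
have := @Dcomp p i i -%R (-1) Ap hi' hi' (is_deriveNid _ _) (oppr0 _).
have hw : \forall h \near 0, wco (h *: ev R i + p) = wco (- h *: ev R i + p).
  near=> h; rewrite !wcoE ?iS4 //.
  by move: hi c0; rewrite !inE => /orP[]/eqP-> c0 /=; rewrite c0 !mulr1 !mulr0 !addr0 !add0r sqrrN.
move=> /(_ hw) E.
have : 2 * partial i L p = 0 by rewrite mulr_natl mulr2n {1}E mulrN1 addNr.
by move/eqP; rewrite mulf_eq0 pnatr_eq0 /= => /eqP.
Unshelve. all: by end_near.
Qed.

Lemma D3 p : A p -> partial 3 L p = 0.
Proof.
move=> Ap.
have := @Dcomp p 3 3 (cst 0) 0 Ap isT isT (is_derive_cst _ _ _) erefl.
have hw : \forall h \near 0, wco (h *: ev R 3 + p) = wco (cst 0 h *: ev R 3 + p).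
  by near=> h; rewrite !wcoE //= !mulr0 !add0r.
by move=> /(_ hw) ->; rewrite mulr0.
Unshelve. all: by end_near.
Qed.

Lemma I1 p : A p -> sin (co p 2) != 0 ->
  partial 2 L p = partial 7 L p * (co p 7 * (cos (co p 2) / sin (co p 2))).
Proof.
move=> Ap s0.
set th := co p 2; set ph := co p 7.
have dm : is_derive (0:R) (1:R) (fun h : R => ph * (sin (h + th) / sin th - 1))
   (ph * (cos th / sin th)).
  by apply: is_derive_eq; rewrite /GRing.scale /= add0r; ring.
apply: (@Dcomp p 2 7 _ _ Ap isT isT dm); first by rewrite /= add0r mulfV // subrr mulr0.
near=> h; rewrite !wcoE //= !mulr1 !mulr0 !add0r.
congr (Num.sqrt (_ + _)); rewrite -/th -/ph.
by field.
Unshelve. all: by end_near.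
Qed.

Lemma t1 (a c : R) : is_derive (0:R) (1:R) (fun h : R => (1 + (2 * a * h + h ^+ 2) * c)) (2 * a * c).
Proof. by apply: is_derive_eq; rewrite /GRing.scale /= ; ring. Qed.

Lemma t3 (a c u : R) : is_derive (0:R) (1:R) (fun h : R => a * (Num.sqrt (1 + (2 * u * h + h ^+ 2) * c) - 1)) (a * (u * c)).
Proof.
have hs : is_derive ((fun h : R => (1 + (2 * u * h + h ^+ 2) * c)) 0) 1 Num.sqrt (2 * Num.sqrt 1)^-1.
  have e : (fun h : R => (1 + (2 * u * h + h ^+ 2) * c)) 0 = 1.
    by rewrite /= mulr0 expr0n /= add0r mul0r addr0.
  rewrite e; apply: is_derive1_sqrt; exact: ltr01.
have hi := t1 u c.
have := @is_derive1_comp _ Num.sqrt (fun h : R => (1 + (2 * u * h + h ^+ 2) * c)) 0 _ _ hs hi.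
move=> H.
apply: is_derive_eq.
rewrite /GRing.scale /= sqrtr1. field. by [].
Qed.

Lemma I2a p : A p -> sin (co p 2) != 0 -> co p 7 != 0 ->
  partial 6 L p = partial 7 L p * (co p 7 * (co p 6 * (sin (co p 2) ^+ 2 * co p 7 ^+ 2)^-1)).
Proof.
move=> Ap s0 ph0.
set th := co p 2; set ph := co p 7; set td := co p 6.
set c := (sin th ^+ 2 * ph ^+ 2)^-1.
have dm := t3 ph c td.
apply: (@Dcomp p 6 7 _ _ Ap isT isT dm).
  by rewrite /= mulr0 expr0n /= add0r mul0r addr0 sqrtr1 subrr mulr0.
have uc : (fun h : R => (1 + (2 * td * h + h ^+ 2) * c)) @ (0:R) --> (1:R).
  have [d _] := t1 td c.
  have := @der_cont _ _ d.
  by rewrite /= mulr0 expr0n /= add0r mul0r addr0.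
have := cvgr_gt (1:R) uc 0 ltr01.
move=> U.
have U' : \forall h \near (0:R), 0 <= 1 + (2 * td * h + h ^+ 2) * c.
  by near=> x; apply: ltW; near: x; exact: U.
near=> h; rewrite !wcoE //= !mulr1 !mulr0 !add0r.
congr (Num.sqrt _); rewrite -/th -/ph -/td.
have u0 : 0 <= 1 + (2 * td * h + h ^+ 2) * c.
  by near: h; exact: U'.
rewrite mulrBr mulr1 addrNK exprMn sqr_sqrtr // /c.
by field; rewrite ph0.
Unshelve. all: by end_near.
Qed.

Lemma I2 p : A p -> sin (co p 2) != 0 ->
  sin (co p 2) ^+ 2 * co p 7 * partial 6 L p = co p 6 * partial 7 L p.
Proof.
move=> Ap s0.
have [ph0|ph0] := eqVneq (co p 7) 0.
  have -> : partial 7 L p = 0 by apply: Ev; rewrite ?inE.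
  by rewrite ph0 !mulr0 mul0r.
rewrite I2a //; field.
by rewrite ph0.
Qed.

Lemma dL2E k p (F : 'rV[R]_8 -> R) : sin (co p 2) != 0 ->
  deltaL k 2 F p = partial 2 F p -
   (co p 4 * (k 8%N (co p 0) (co p 1) * partial 6 F p + k 11%N (co p 0) (co p 1) / sin (co p 2) * partial 7 F p)
  + co p 5 * (k 9%N (co p 0) (co p 1) * partial 6 F p + k 12%N (co p 0) (co p 1) / sin (co p 2) * partial 7 F p)
  + co p 6 * (k 7%N (co p 0) (co p 1) * partial 4 F p + k 10%N (co p 0) (co p 1) * partial 5 F p)
  + co p 7 * (cos (co p 2) / sin (co p 2) * partial 7 F p)).
Proof.
move=> s0.
rewrite /deltaL !big_ord_recr big_ord0 /=.
rewrite /Gam /= !big_ord0.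
rewrite -[(4 + 0)%N]/4%N -[(4 + 1)%N]/5%N -[(4 + 2)%N]/6%N -[(4 + 3)%N]/7%N.
move: (k 8%N _ _) (k 9%N _ _) (k 7%N _ _) (k 10%N _ _) (k 11%N _ _) (k 12%N _ _) => a8 a9 a7 a10 a11 a12.
move: (co p 4) (co p 5) (co p 6) (co p 7) (partial 4 F p) (partial 5 F p) (partial 6 F p) (partial 7 F p) (sin _) (cos _) (partial 2 F p) => *.
ring.
Qed.

Lemma dL3E k p (F : 'rV[R]_8 -> R) :
  deltaL k 3 F p = partial 3 F p -
   (co p 4 * (- (k 11%N (co p 0) (co p 1) * sin (co p 2)) * partial 6 F p + k 8%N (co p 0) (co p 1) * partial 7 F p)
  + co p 5 * (- (k 12%N (co p 0) (co p 1) * sin (co p 2)) * partial 6 F p + k 9%N (co p 0) (co p 1) * partial 7 F p)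
  + co p 6 * (cos (co p 2) / sin (co p 2) * partial 7 F p)
  + co p 7 * (k 7%N (co p 0) (co p 1) * sin (co p 2) ^+ 2 * partial 4 F p
      + k 10%N (co p 0) (co p 1) * sin (co p 2) ^+ 2 * partial 5 F p
      - sin (co p 2) * cos (co p 2) * partial 6 F p)).
Proof.
rewrite /deltaL !big_ord_recr big_ord0 /=.
rewrite /Gam /= !big_ord0.
rewrite -[(4 + 0)%N]/4%N -[(4 + 1)%N]/5%N -[(4 + 2)%N]/6%N -[(4 + 3)%N]/7%N.
move: (k 8%N _ _) (k 9%N _ _) (k 7%N _ _) (k 10%N _ _) (k 11%N _ _) (k 12%N _ _) => a8 a9 a7 a10 a11 a12.
move: (co p 4) (co p 5) (co p 6) (co p 7) (partial 4 F p) (partial 5 F p) (partial 6 F p) (partial 7 F p) (sin _) (cos _) (partial 3 F p) => *.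
ring.
Qed.

Lemma alg6 (t f s D6 D7 w : R) : w != 0 -> w ^+ 2 = t ^+ 2 + s ^+ 2 * f ^+ 2 ->
  s ^+ 2 * f * D6 = t * D7 -> D6 = t * ((t * D6 + f * D7) / w) / w.
Proof.
move=> w0 hw h.
have -> : t * ((t * D6 + f * D7) / w) / w = (t ^+ 2 * D6 + f * (t * D7)) / w ^+ 2 by field.
rewrite -h.
have -> : t ^+ 2 * D6 + f * (s ^+ 2 * f * D6) = D6 * (t ^+ 2 + s ^+ 2 * f ^+ 2) by ring.
by rewrite -hw; field.
Qed.

Lemma alg7 (t f s D6 D7 w : R) : w != 0 -> w ^+ 2 = t ^+ 2 + s ^+ 2 * f ^+ 2 ->
  s ^+ 2 * f * D6 = t * D7 -> D7 = s ^+ 2 * f * ((t * D6 + f * D7) / w) / w.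
Proof.
move=> w0 hw h.
have -> : s ^+ 2 * f * ((t * D6 + f * D7) / w) / w = (t * (s ^+ 2 * f * D6) + s ^+ 2 * f ^+ 2 * D7) / w ^+ 2 by field.
rewrite h.
have -> : t * (t * D7) + s ^+ 2 * f ^+ 2 * D7 = D7 * (t ^+ 2 + s ^+ 2 * f ^+ 2) by ring.
by rewrite -hw; field.
Qed.

Lemma wco2 p : wco p ^+ 2 = co p 6 ^+ 2 + sin (co p 2) ^+ 2 * co p 7 ^+ 2.
Proof. by rewrite /wco sqr_sqrtr // addr_ge0 ?sqr_ge0 // mulr_ge0 ?sqr_ge0. Qed.

Hypothesis Hs : forall p, A p -> sin (co p 2) != 0.

Lemma D67 p : A p -> wco p != 0 ->
  partial 6 L p = co p 6 * partial_w L p / wco p /\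
  partial 7 L p = sin (co p 2) ^+ 2 * co p 7 * partial_w L p / wco p.
Proof.
move=> Ap w0; have h := @I2 p Ap (Hs p Ap).
rewrite /partial_w; split.
  exact: (@alg6 (co p 6) (co p 7) (sin (co p 2)) (partial 6 L p) (partial 7 L p) (wco p) w0 (wco2 p) h).
exact: (@alg7 (co p 6) (co p 7) (sin (co p 2)) (partial 6 L p) (partial 7 L p) (wco p) w0 (wco2 p) h).
Qed.

Lemma keyw k p : A p -> wco p != 0 ->
  let K := k 11%N (co p 0) (co p 1) * co p 4 + k 12%N (co p 0) (co p 1) * co p 5 in
  wco p * deltaL k 2 L p =
    - co p 6 * delta_w k L p - sin (co p 2) * co p 7 * (K * partial_w L p) /\
  wco p * deltaL k 3 L p =
    - sin (co p 2) ^+ 2 * co p 7 * delta_w k L p + sin (co p 2) * co p 6 * (K * partial_w L p).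
Proof.
move=> Ap w0 K.
have s0 := Hs p Ap.
have [E6 E7] := @D67 p Ap w0.
rewrite dL2E // dL3E I1 // D3 // E6 E7 /K /delta_w /=.
move: (k 8%N _ _) (k 9%N _ _) (k 7%N _ _) (k 10%N _ _) (k 11%N _ _) (k 12%N _ _) => a8 a9 a7 a10 a11 a12.
move: s0; move: (co p 4) (co p 5) (co p 6) (co p 7) (partial 4 L p) (partial 5 L p) (partial_w L p) (sin _) (cos _) => ? ? ? ? ? ? ? ? ? s0.
by split; field; rewrite w0 s0.
Qed.

Lemma algXY (t f s X Y w : R) : s != 0 -> w != 0 -> w ^+ 2 = t ^+ 2 + s ^+ 2 * f ^+ 2 ->
  - t * X - s * f * Y = 0 -> - s ^+ 2 * f * X + s * t * Y = 0 -> X = 0 /\ Y = 0.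
Proof.
move=> s0 w0 hw e1 e2.
have hX : w ^+ 2 * X = 0.
  transitivity (- (t * (- t * X - s * f * Y) + f * (- s ^+ 2 * f * X + s * t * Y))).
    by rewrite hw; ring.
  by rewrite e1 e2; ring.
have hY : s * w ^+ 2 * Y = 0.
  transitivity (- (s ^+ 2 * f * (- t * X - s * f * Y) - t * (- s ^+ 2 * f * X + s * t * Y))).
    by rewrite hw; ring.
  by rewrite e1 e2; ring.
have w2 : w ^+ 2 != 0 by rewrite expf_neq0.
split; first by apply: (mulfI w2); rewrite mulr0.
have sw : s * w ^+ 2 != 0 by rewrite mulf_neq0.
by apply: (mulfI sw); rewrite mulr0.
Qed.

Lemma wco_neq0 p : co p 6 != 0 -> wco p != 0.
Proof.
move=> t0; apply/negP => /eqP w0.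
have h := wco2 p; rewrite w0 expr0n /= in h.
have h1 : 0 < co p 6 ^+ 2 by rewrite lt_def sqr_ge0 andbT expf_neq0.
have h2 : 0 <= sin (co p 2) ^+ 2 * co p 7 ^+ 2 by rewrite mulr_ge0 ?sqr_ge0.
move: h h1 h2; move: (co p 6 ^+ 2) (sin (co p 2) ^+ 2 * co p 7 ^+ 2) => a b.
lra.
Qed.

Lemma aff_near (c d : R) : c != 0 -> \forall h \near (0:R), h * d + c != 0.
Proof.
move=> c0.
have cv : (fun h : R => h * d + c) @ (0:R) --> 0 * d + c.
  apply: cvgD; last exact: cvg_cst.
  by apply: cvgMl; exact: cvg_id.
rewrite mul0r add0r in cv.
exact: (cvgr_neq0 c cv c0).
Qed.

Variable k : nat -> R -> R -> R.
Hypothesis HF : forall p, A p -> deltaL k 2 L p = 0 /\ deltaL k 3 L p = 0.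

Lemma fwd_w p : A p -> wco p != 0 ->
  delta_w k L p = 0 /\
  (k 11%N (co p 0) (co p 1) * co p 4 + k 12%N (co p 0) (co p 1) * co p 5) * partial_w L p = 0.
Proof.
move=> Ap w0.
have [e1 e2] := @keyw k p Ap w0.
have [d2 d3] := HF p Ap.
rewrite d2 d3 mulr0 in e1 e2.
apply: (@algXY (co p 6) (co p 7) (sin (co p 2)) _ _ (wco p) (Hs p Ap) w0 (wco2 p)).
  by rewrite e1 mulNr mulrA.
by rewrite e2 mulNr mulrA.
Qed.

Hypothesis Hdet : forall p, A p -> \det (gmat L p) != 0.

Lemma Zj q j : A q -> co q 6 != 0 ->
  k 11%N (co q 0) (co q 1) * co q 4 + k 12%N (co q 0) (co q 1) * co q 5 != 0 ->
  j \in [:: 4; 5; 6; 7]%N -> partial j (partial 6 L) q = 0.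
Proof.
move=> Aq t0 K0 hj.
have j8 : (j < 8)%N by move: hj; rewrite !inE => /or4P[]/eqP->.
rewrite {1}/partial Dline.
rewrite (@near_eq_derive _ _ _ _ (cst 0)) ?derive_cst //.
set K := k 11%N (co q 0) (co q 1) * co q 4 + k 12%N (co q 0) (co q 1) * co q 5.
set d := k 11%N (co q 0) (co q 1) * (j == 4)%:R + k 12%N (co q 0) (co q 1) * (j == 5)%:R.
have N1 := @near_line A q (ev R j) oA Aq.
have N2 := @aff_near (co q 6) (j == 6)%:R t0.
have N3 := @aff_near K d K0.
near=> h.
set q' := h *: ev R j + q.
have Aq' : A q' by rewrite /q'; near: h; exact: N1.
have t0' : co q' 6 != 0 by rewrite /q' coE //; near: h; exact: N2.
have c0 : co q' 0 = co q 0.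
  by rewrite /q' coE //; move: hj; rewrite !inE => /or4P[]/eqP-> /=; rewrite mulr0 add0r.
have c1 : co q' 1 = co q 1.
  by rewrite /q' coE //; move: hj; rewrite !inE => /or4P[]/eqP-> /=; rewrite mulr0 add0r.
have K0' : k 11%N (co q' 0) (co q' 1) * co q' 4 + k 12%N (co q' 0) (co q' 1) * co q' 5 != 0.
  have -> : k 11%N (co q' 0) (co q' 1) * co q' 4 + k 12%N (co q' 0) (co q' 1) * co q' 5
     = h * d + K.
    rewrite c0 c1 /q' !coE // /d /K.
    move: (k 11%N _ _) (k 12%N _ _) => a b; ring.
  by near: h; exact: N3.
have w0 := @wco_neq0 q' t0'.
have [_ e] := @fwd_w q' Aq' w0.
have P0 : partial_w L q' = 0.
  by move/eqP: e; rewrite mulf_eq0 (negbTE K0') /= => /eqP.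
have [E6 _] := @D67 q' Aq' w0.
by rewrite E6 P0 mulr0 mul0r.
Unshelve. all: by end_near.
Qed.

Lemma claimC q : A q -> co q 6 != 0 ->
  k 11%N (co q 0) (co q 1) * co q 4 + k 12%N (co q 0) (co q 1) * co q 5 = 0.
Proof.
move=> Aq t0; apply/eqP; apply: contraT => K0.
have := Hdet q Aq.
rewrite (expand_det_col _ (inord 2)) big1 ?eqxx // => i _.
rewrite mxE inordK // -[(4 + 2)%N]/6%N.
rewrite (@Zj q (4 + i)%N) ?mulr0 ?mul0r //.
by case: i => [[|[|[|[|m]]]] hm].
Qed.

Lemma w0_zero p : A p -> wco p = 0 -> co p 6 = 0 /\ co p 7 = 0.
Proof.
move=> Ap w0.
have h := wco2 p; rewrite w0 expr0n /= in h.
have h1 : 0 <= co p 6 ^+ 2 by rewrite sqr_ge0.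
have h2 : 0 <= sin (co p 2) ^+ 2 * co p 7 ^+ 2 by rewrite mulr_ge0 ?sqr_ge0.
have e1 : co p 6 ^+ 2 = 0.
  move: h h1 h2; move: (co p 6 ^+ 2) (sin (co p 2) ^+ 2 * co p 7 ^+ 2) => a b; lra.
have e2 : sin (co p 2) ^+ 2 * co p 7 ^+ 2 = 0.
  move: h h1 h2; move: (co p 6 ^+ 2) (sin (co p 2) ^+ 2 * co p 7 ^+ 2) => a b; lra.
split.
  by move/eqP: e1; rewrite sqrf_eq0 => /eqP.
have s2 : sin (co p 2) ^+ 2 != 0 by rewrite expf_neq0 // Hs.
have : co p 7 ^+ 2 = 0 by apply: (mulfI s2); rewrite mulr0.
by move/eqP; rewrite sqrf_eq0 => /eqP.
Qed.

Lemma bwd p : A p ->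
  k 11%N (co p 0) (co p 1) = 0 -> k 12%N (co p 0) (co p 1) = 0 ->
  (wco p != 0 -> delta_w k L p = 0) ->
  deltaL k 2 L p = 0 /\ deltaL k 3 L p = 0.
Proof.
move=> Ap k11 k12 Hw.
have s0 := Hs p Ap.
have [w0|w0] := eqVneq (wco p) 0.
  have [t0 f0] := @w0_zero p Ap w0.
  have D6 : partial 6 L p = 0 by apply: Ev; rewrite ?inE.
  have D7 : partial 7 L p = 0 by apply: Ev; rewrite ?inE.
  rewrite dL2E // dL3E I1 // D3 // D6 D7 t0 f0.
  move: (k 8%N _ _) (k 9%N _ _) (k 7%N _ _) (k 10%N _ _) (k 11%N _ _) (k 12%N _ _) => a8 a9 a7 a10 a11 a12.
  move: (co p 4) (co p 5) (partial 4 L p) (partial 5 L p) (sin _) (cos _) => *.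
  by split; ring.
have [e1 e2] := @keyw k p Ap w0.
rewrite Hw // k11 k12 !mul0r add0r mul0r !mulr0 subr0 in e1 e2.
by split; apply: (mulfI w0); rewrite mulr0 ?e1 ?e2 ?addr0.
Qed.
End H.

Lemma near_ex (R : realType) (P : R -> Prop) :
  (\forall h \near (0:R), P h) -> exists h, h != 0 /\ P h.
Proof.
move=> N.
have : \forall h \near (0:R)^', h != 0 /\ P h.
  near=> h; split.
    by near: h; exact: nbhs_dnbhs_neq.
  by near: h; exact: nbhs_dnbhs N.
by move/filter_ex.
Unshelve. all: by end_near.
Qed.

Theorem lemma1 (R : realType) (M : set 'rV[R]_4) (A : set 'rV[R]_8)
  (k : nat -> R -> R -> R) (L : 'rV[R]_8 -> R) :
  chart_domain M -> conic_subbundle M A -> pseudo_finsler A L ->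
  so3_symmetric A L ->
  ((forall p, A p -> deltaL k 2 L p = 0 /\ deltaL k 3 L p = 0) <->
   ((forall p, A p -> wco p != 0 -> delta_w k L p = 0) /\
    (forall x, M x -> k 11%N (x ord0 (inord 0)) (x ord0 (inord 1)) = 0 /\
                      k 12%N (x ord0 (inord 0)) (x ord0 (inord 1)) = 0))).
Proof.
move=> [oM sM] [oA Abase Afib Acone] [Lsm Lhom Ldet] [l HL].
have Hd : forall p i, (i < 8)%N -> A p -> derivable L p (ev R i).
  move=> p i hi Ap; have [_ H1] := Lsm 1%N.
  exact: ((H1 (Ordinal hi)).1 p Ap).
have bE : forall (p : 'rV[R]_8) i, (i < 4)%N -> base p ord0 (inord i) = co p i.
  by move=> p i hi; rewrite /base mxE inordK.
have Hs : forall p, A p -> sin (co p 2) != 0.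
  by move=> p Ap; have := sM _ (Abase p Ap).1; rewrite bE.
split.
  move=> HF; split.
    by move=> p Ap w0; exact: (proj1 (fwd_w _ _ _ _ oA HL Hd Hs _ HF _ Ap w0)).
  move=> x Mx.
  have [p0 [Ap0 Hb]] := Afib x Mx.
  rewrite -Hb !bE //.
  have [q1 [Aq1 t1 c0 c1]] : exists q1, [/\ A q1, co q1 6 != 0, co q1 0 = co p0 0 & co q1 1 = co p0 1].
    have [t0|t0] := eqVneq (co p0 6) 0.
      have [h [h0 Ah]] := @near_ex R _ (@near_line R A p0 (ev R 6) oA Ap0).
      exists (h *: ev R 6 + p0); split => //.
      - by rewrite coE //= t0 mulr1 addr0.
      - by rewrite coE //= mulr0 add0r.
      - by rewrite coE //= mulr0 add0r.
    by exists p0.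
  have N4 := @near_line R A q1 (ev R 4) oA Aq1.
  have N5 := @near_line R A q1 (ev R 5) oA Aq1.
  have [h [h0 [A4 A5]]] : exists h : R, h != 0 /\ (A (h *: ev R 4 + q1) /\ A (h *: ev R 5 + q1)).
    apply: near_ex; near=> h; split; near: h; [exact: N4 | exact: N5].
  have C1 := claimC _ _ _ _ oA HL Hd Hs _ HF Ldet _ Aq1 t1.
  have C4 := claimC _ _ _ _ oA HL Hd Hs _ HF Ldet _ A4.
  have C5 := claimC _ _ _ _ oA HL Hd Hs _ HF Ldet _ A5.
  rewrite !coE //= !mulr0 !mulr1 !add0r in C4 C5.
  rewrite -c0 -c1.
  move: (k 11%N _ _) (k 12%N _ _) C1 C4 C5 => a b C1 C4 C5.
  split.
    apply: (mulIf h0); rewrite mul0r.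
    have -> : a * h = (a * (h + co q1 4) + b * co q1 5) - (a * co q1 4 + b * co q1 5) by ring.
    by rewrite (C4 t1) C1 subrr.
  apply: (mulIf h0); rewrite mul0r.
  have -> : b * h = (a * co q1 4 + b * (h + co q1 5)) - (a * co q1 4 + b * co q1 5) by ring.
  by rewrite (C5 t1) C1 subrr.
move=> [Hw Hk] p Ap.
have [M11 M12] := Hk _ (Abase p Ap).1.
rewrite !bE // in M11 M12.
exact: (bwd _ _ _ _ oA HL Hd Hs _ _ Ap M11 M12 (Hw p Ap)).
Unshelve. all: by end_near.
Qed.
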